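(* Let $m\in\mathbb{N}$, $r\in\{1,\dots,m\}$, and let $Z_r$ be the set of all vertices of $D_m$ of generation number $r$. Then every connected component of the graph $D_m\setminus Z_r$ has diameter (with respect to the metric $d_{D_m}$) strictly less than $2^r$.
   Context: Diamonds: $D_0$ is an edge; $D_i$ is obtained from $D_{i-1}$ by replacing each edge $uv$ by a quadrilateral $u,a,v,b$; $D_m$ has the shortest path metric with unit edges. Generation number $r$ consists of the vertices of $D_{m-r+1}$ not belonging to $D_{m-r}$. $D_m\setminus Z_r$ is the graph obtained by deleting the vertices in $Z_r$ and all edges incident to them. *)

(* Defs.v *)
From mathcomp Require Import all_boot.
Set Implicit Arguments. Unset Strict Implicit. Unset Printing Implicit Defensive.

(* Bot, Top : the two vertices of D_0.
   Mid w s  : one of the two new vertices (s = false: "a", s = true: "b")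
              inserted when the edge of D_(size w) encoded by the word w is
              replaced by the quadrilateral u,a,v,b; it belongs to
              D_(size w + 1) \ D_(size w). *)
Inductive vtx : Type :=
| Bot : vtx
| Top : vtx
| Mid : seq 'I_4 -> bool -> vtx.

(* Edges of D_i are encoded by words w : seq 'I_4 of size i (the head is
   the most recent choice).  [ends w] gives the endpoints of the edge.
   The edge uv (word w) of D_i is replaced in D_(i+1) by the four edges
   ua (0::w), av (1::w), ub (2::w), bv (3::w), with a = Mid w false,
   b = Mid w true. *)
Fixpoint ends (w : seq 'I_4) : vtx * vtx :=
  match w with
  | [::] => (Bot, Top)
  | k :: w' =>
      let: (u, v) := ends w' in
      let a := Mid w' false in
      let b := Mid w' true in
      match nat_of_ord k with
      | 0 => (u, a)
      | 1 => (a, v)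
      | 2 => (u, b)
      | _ => (b, v)
      end
  end.

Definition inV (m : nat) (x : vtx) : Prop :=
  match x with
  | Bot | Top => True
  | Mid w _ => size w < m
  end.

Definition adj (m : nat) (x y : vtx) : Prop :=
  exists w : seq 'I_4, size w = m /\ (ends w = (x, y) \/ ends w = (y, x)).

(* Z_r in D_m: vertices of D_(m-r+1) not in D_(m-r), i.e. the vertices
   created at step m-r+1 (words of size m-r). *)
Definition Z (m r : nat) (x : vtx) : Prop :=
  exists (w : seq 'I_4) (s : bool), x = Mid w s /\ size w = (m - r)%N.

Inductive walk (E : vtx -> vtx -> Prop) : vtx -> vtx -> nat -> Prop :=
| walk_nil x : walk E x x 0
| walk_cons x y z n : E x y -> walk E y z n -> walk E x z n.+1.

Definition is_dist (m : nat) (x y : vtx) (d : nat) : Prop :=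
  walk (adj m) x y d /\ forall n, walk (adj m) x y n -> d <= n.

Definition adj_del (m r : nat) (x y : vtx) : Prop :=
  adj m x y /\ ~ Z m r x /\ ~ Z m r y.

Definition same_comp_del (m r : nat) (x y : vtx) : Prop :=
  inV m x /\ inV m y /\ ~ Z m r x /\ ~ Z m r y /\
  exists n, walk (adj_del m r) x y n.

(* Main.v *)
Require Import Defs.
From mathcomp Require Import all_boot.
From mathcomp Require Import zify.
From Stdlib Require Import Classical.
Set Implicit Arguments. Unset Strict Implicit. Unset Printing Implicit Defensive.

Lemma walk1 E x y : E x y -> walk E x y 1.
Proof. move=> e; econstructor; [exact e | constructor]. Qed.

Lemma walk_cat E x y z a b : walk E x y a -> walk E y z b -> walk E x z (a + b).
Proof.
elim=> [//|x' y' z' n e _ IH] H.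
rewrite addSn; econstructor; [exact e | exact: IH].
Qed.

Lemma walk_rev E : (forall x y, E x y -> E y x) ->
  forall x y n, walk E x y n -> walk E y x n.
Proof.
move=> hE x y n; elim=> [x0|x' y' z' n' e _ IH]; first by constructor.
rewrite -addn1; apply: walk_cat IH _; exact: walk1 (hE _ _ e).
Qed.

Lemma walk0 E x y : walk E x y 0 -> x = y.
Proof. move=> H; by inversion H. Qed.

Lemma adj_sym m x y : adj m x y -> adj m y x.
Proof. case=> w [hs [h|h]]; exists w; split; [exact hs|right; exact h|exact hs|left; exact h]. Qed.

Definition i0 : 'I_4 := @Ordinal 4 0 isT.
Definition i1 : 'I_4 := @Ordinal 4 1 isT.
Definition i2 : 'I_4 := @Ordinal 4 2 isT.
Definition i3 : 'I_4 := @Ordinal 4 3 isT.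

Lemma ends0 w : ends (i0 :: w) = ((ends w).1, Mid w false).
Proof. by move=> /=; case: (ends w). Qed.
Lemma ends1 w : ends (i1 :: w) = (Mid w false, (ends w).2).
Proof. by move=> /=; case: (ends w). Qed.
Lemma ends2 w : ends (i2 :: w) = ((ends w).1, Mid w true).
Proof. by move=> /=; case: (ends w). Qed.
Lemma ends3 w : ends (i3 :: w) = (Mid w true, (ends w).2).
Proof. by move=> /=; case: (ends w). Qed.

Lemma ends_kend (c : 'I_4) w0 : exists s, ends (c :: w0) =
  if odd c then (Mid w0 s, (ends w0).2) else ((ends w0).1, Mid w0 s).
Proof.
case: c => [[|[|[|[|k]]]] Hk] //=; case: (ends w0) => u v /=;
  [exists false | exists false | exists true | exists true] => //.
Qed.

Definition kend (c : 'I_4) w0 := if odd c then (ends w0).2 else (ends w0).1.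

Lemma inV_mono m m' x : m <= m' -> inV m x -> inV m' x.
Proof. case: x => //= w _ h1 h2; lia. Qed.

Lemma ends_inV w : inV (size w) (ends w).1 /\ inV (size w) (ends w).2.
Proof.
elim: w => [|k w [IH1 IH2]]; first by [].
have [s E] := ends_kend k w; rewrite E /=.
have h1 := inV_mono (leqnSn (size w)) IH1.
have h2 := inV_mono (leqnSn (size w)) IH2.
by case: (odd k) => /=; split.
Qed.

Lemma kend_inV c w0 : inV (size w0) (kend c w0).
Proof. rewrite /kend; case: (odd c); apply ends_inV. Qed.

Lemma ends_nseq0 j w : (ends (nseq j i0 ++ w)).1 = (ends w).1.
Proof. elim: j => [//|j IH]; rewrite /= -IH; exact: (f_equal fst (ends0 _)). Qed.
Lemma ends_nseq3 j w : (ends (nseq j i3 ++ w)).2 = (ends w).2.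
Proof. elim: j => [//|j IH]; rewrite /= -IH; exact: (f_equal snd (ends3 _)). Qed.

Lemma incident m x : inV m x ->
  exists w, size w = m /\ (x = (ends w).1 \/ x = (ends w).2).
Proof.
case: x => [_|_|v s /= hv].
- exists (nseq m i0 ++ [::]); rewrite size_cat size_nseq addn0; split => //.
  by left; rewrite ends_nseq0.
- exists (nseq m i3 ++ [::]); rewrite size_cat size_nseq addn0; split => //.
  by right; rewrite ends_nseq3.
- case: s.
  + exists (nseq (m - size v - 1) i3 ++ i2 :: v); rewrite size_cat size_nseq /=.
    split; first lia. by right; rewrite ends_nseq3 ends2.
  + exists (nseq (m - size v - 1) i3 ++ i0 :: v); rewrite size_cat size_nseq /=.
    split; first lia. by right; rewrite ends_nseq3 ends0.
Qed.

Lemma split_word m r (w : seq (ordinal 4)) : 1 <= r -> r <= m -> size w = m ->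
  exists p c w0, w = p ++ c :: w0 /\ size w0 = m - r.
Proof.
move=> h1 h2 hs.
have hd : size (drop (r - 1) w) = m - (r - 1) by rewrite size_drop hs.
move: (cat_take_drop (r - 1) w) hd.
case: (drop (r - 1) w) => [|c w0] E hd /=; first by move: hd => /=; lia.
exists (take (r - 1) w), c, w0; split => //; move: hd => /=; lia.
Qed.

Definition incopy q x :=
  x = (ends q).1 \/ x = (ends q).2 \/ exists p s, x = Mid (p ++ q) s.

Lemma ends_in_copy p q : incopy q (ends (p ++ q)).1 /\ incopy q (ends (p ++ q)).2.
Proof.
elim: p => [|k p [IH1 IH2]]; first by split; [left|right; left].
have [s E] := ends_kend k (p ++ q); rewrite cat_cons E.
have hm : incopy q (Mid (p ++ q) s) by right; right; exists p, s.
by case: (odd k) => /=; split.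
Qed.

Definition Anch m r u x := inV m x /\ ~ Z m r x /\
  exists c w0, size w0 = m - r /\ incopy (c :: w0) x /\ u = kend c w0.

Lemma normalize m r c w0 x : size w0 = m - r -> incopy (c :: w0) x -> ~ Z m r x ->
  x = kend c w0 \/ exists p s, x = Mid (p ++ c :: w0) s.
Proof.
move=> hs hc hZ; have [s E] := ends_kend c w0.
have hZs : ~ (x = Mid w0 s) by move=> hx; apply: hZ; exists w0, s.
rewrite /kend; case: hc => [hx|[hx|h]]; last by right.
- subst x; rewrite E in hZs *; case: (odd c) hZs => /= hZs; [by case: hZs | by left].
- subst x; rewrite E in hZs *; case: (odd c) hZs => /= hZs; [by left | by case: hZs].
Qed.

Lemma suffix_eq (T : eqType) (p q p' q' : seq T) :
  p ++ q = p' ++ q' -> size q = size q' -> q = q'.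
Proof.
move=> E hs.
have hp : size p = size p'.
  have := f_equal size E; rewrite !size_cat hs; lia.
by move/eqP: E; rewrite eqseq_cat // => /andP [_ /eqP].
Qed.

Lemma anch_unique m r u u' x : Anch m r u x -> Anch m r u' x -> u = u'.
Proof.
move=> [hv [hZ [c [w0 [hs [hc ->]]]]]] [_ [_ [c' [w0' [hs' [hc' ->]]]]]].
case: (normalize hs hc hZ) => [E1|[p [s E1]]];
case: (normalize hs' hc' hZ) => [E2|[p' [s' E2]]].
- by rewrite -E1 -E2.
- exfalso; have := kend_inV c w0; rewrite -E1 E2 /= size_cat /=; lia.
- exfalso; have := kend_inV c' w0'; rewrite -E2 E1 /= size_cat /=; lia.
- rewrite E1 in E2; case: E2 => E2 _.
  have := suffix_eq E2; rewrite /= hs hs' => /(_ erefl) [-> ->] //.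
Qed.

Lemma edge_anch m r (w : seq (ordinal 4)) : 1 <= r -> r <= m -> size w = m -> exists c w0,
  size w0 = m - r /\ incopy (c :: w0) (ends w).1 /\ incopy (c :: w0) (ends w).2.
Proof.
move=> h1 h2 hs; have [p [c [w0 [E hs0]]]] := split_word h1 h2 hs.
exists c, w0; split => //; rewrite E; exact: ends_in_copy.
Qed.

Lemma anch_step m r u x y : 1 <= r -> r <= m ->
  adj_del m r x y -> Anch m r u x -> Anch m r u y.
Proof.
move=> h1 h2 [[w [hs hE]] [hZx hZy]] hA.
have [c [w0 [hs0 [hc1 hc2]]]] := edge_anch h1 h2 hs.
have [hv1 hv2] := ends_inV w; rewrite hs in hv1 hv2.
have [hx hy cx cy] : [/\ inV m x, inV m y, incopy (c :: w0) x & incopy (c :: w0) y].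
  by case: hE => E; rewrite E /= in hv1 hv2 hc1 hc2; split.
have Ax : Anch m r (kend c w0) x by split => //; split => //; exists c, w0.
have Ay : Anch m r (kend c w0) y by split => //; split => //; exists c, w0.
by rewrite (anch_unique hA Ax).
Qed.

Lemma anch_walk m r u x y n : 1 <= r -> r <= m ->
  walk (adj_del m r) x y n -> Anch m r u x -> Anch m r u y.
Proof.
move=> h1 h2; elim=> [//|x' y' z' n' e _ IH] hA.
by apply: IH; apply: anch_step e hA.
Qed.

Lemma anch_exists m r x : 1 <= r -> r <= m -> inV m x -> ~ Z m r x ->
  exists u, Anch m r u x.
Proof.
move=> h1 h2 hv hZ; have [w [hs hx]] := incident hv.
have [c [w0 [hs0 [hc1 hc2]]]] := edge_anch h1 h2 hs.
exists (kend c w0); split => //; split => //; exists c, w0; split => //.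
by split => //; case: hx => ->.
Qed.

Lemma full m n w : size w + n = m -> walk (adj m) (ends w).1 (ends w).2 (2 ^ n).
Proof.
elim: n w => [|n IH] w hs.
  by apply: walk1; exists w; split; [rewrite addn0 in hs | left; case: (ends w)].
have ->: 2 ^ n.+1 = 2 ^ n + 2 ^ n by rewrite expnS mul2n addnn.
have h0 := IH (i0 :: w); have h1 := IH (i1 :: w).
rewrite ends0 ends1 /= in h0 h1.
apply: walk_cat (h0 _) (h1 _); rewrite /=; lia.
Qed.

Lemma bot_to_mid m n w s : size w + n.+1 = m -> walk (adj m) (ends w).1 (Mid w s) (2 ^ n).
Proof.
move=> hs; case: s.
- have := full (w := i2 :: w) (n := n); rewrite ends2 /=; apply; lia.
- have := full (w := i0 :: w) (n := n); rewrite ends0 /=; apply; lia.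
Qed.

Lemma mid_to_top m n w s : size w + n.+1 = m -> walk (adj m) (Mid w s) (ends w).2 (2 ^ n).
Proof.
move=> hs; case: s.
- have := full (w := i3 :: w) (n := n); rewrite ends3 /=; apply; lia.
- have := full (w := i1 :: w) (n := n); rewrite ends1 /=; apply; lia.
Qed.

Lemma dist_copy m n w x : size w + n = m ->
  (x = (ends w).1 \/ x = (ends w).2 \/ exists p s, x = Mid (p ++ w) s /\ size p < n) ->
  exists a b, walk (adj m) (ends w).1 x a /\ walk (adj m) x (ends w).2 b /\ a + b = 2 ^ n.
Proof.
elim: n w x => [|n IH] w x hs [->|[->|[p [s [-> hp]]]]].
- by exists 0, (2 ^ 0); split; [constructor | split; [exact: full|]].
- by exists (2 ^ 0), 0; split; [exact: full | split; [constructor|rewrite addn0]].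
- by [].
- by exists 0, (2 ^ n.+1); split; [constructor | split; [exact: full|]].
- by exists (2 ^ n.+1), 0; split; [exact: full | split; [constructor|rewrite addn0]].
- have e2 : 2 ^ n.+1 = 2 ^ n + 2 ^ n by rewrite expnS mul2n addnn.
  case/lastP: p hp => [|p k] hp.
    exists (2 ^ n), (2 ^ n); split; first exact: bot_to_mid.
    by split; [exact: mid_to_top|].
  rewrite size_rcons ltnS in hp; rewrite cat_rcons.
  have hs' : size (k :: w) + n = m by rewrite /=; lia.
  have [a [b [ha [hb hab]]]] := IH (k :: w) (Mid (p ++ k :: w) s) hs'
    (or_intror (or_intror (ex_intro _ p (ex_intro _ s (conj erefl hp))))).
  have [s0 E] := ends_kend k w; rewrite E in ha hb.
  case: (odd k) ha hb => /= ha hb.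
  + exists (2 ^ n + a), b; split; last by split=> //; lia.
    exact: walk_cat (bot_to_mid _ _) ha.
  + exists a, (b + 2 ^ n); split=> //; split; last lia.
    exact: walk_cat hb (mid_to_top _ _).
Qed.

Lemma anch_dist m r u x : 1 <= r -> r <= m -> Anch m r u x ->
  exists a, walk (adj m) u x a /\ a < 2 ^ (r - 1).
Proof.
move=> h1 h2 [hv [hZ [c [w0 [hs [hc ->]]]]]].
have hs' : size (c :: w0) + (r - 1) = m by rewrite /=; lia.
have hx : x = (ends (c :: w0)).1 \/ x = (ends (c :: w0)).2 \/
   exists p s, x = Mid (p ++ c :: w0) s /\ size p < r - 1.
  case: hc => [->|[->|[p [s E]]]]; [by left | by right; left|].
  right; right; exists p, s; split => //; move: hv; rewrite E /= size_cat /=; lia.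
have [a [b [ha [hb hab]]]] := dist_copy hs' hx.
have [s0 E] := ends_kend c w0; rewrite E /kend in ha hb *.
case: (odd c) ha hb => /= ha hb.
- exists b; split; first by apply: walk_rev hb; exact: adj_sym.
  case: a ha hab => [ha|a _]; last lia.
  by exfalso; apply: hZ; exists w0, s0; rewrite -(walk0 ha).
- exists a; split => //.
  case: b hb hab => [hb|b _]; last lia.
  by exfalso; apply: hZ; exists w0, s0; rewrite (walk0 hb).
Qed.

Lemma min_walk m x y : forall N n, n <= N -> walk (adj m) x y n ->
  exists d, is_dist m x y d /\ d <= n.
Proof.
elim=> [|N IH] n hn hw.
  exists n; split => //; split => // k _; move: hn; lia.
case: (classic (exists k, k < n /\ walk (adj m) x y k)) => [[k [hk hw']]|hno].
  have [d [hd hdk]] := IH k ltac:(lia) hw'.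
  by exists d; split => //; lia.
exists n; split => //; split => // k hk.
case: (leqP n k) => // hlt; exfalso; apply: hno; by exists k.
Qed.

Theorem mainTheorem10 (m r : nat) (hr1 : 1 <= r) (hrm : r <= m) (x y : vtx) :
  same_comp_del m r x y ->
  exists d : nat, is_dist m x y d /\ d < 2 ^ r.
Proof.
move=> [hx [hy [hZx [hZy [n hw]]]]].
have [u hu] := anch_exists hr1 hrm hx hZx.
have hu' := anch_walk hr1 hrm hw hu.
have [a [ha ha']] := anch_dist hr1 hrm hu.
have [b [hb hb']] := anch_dist hr1 hrm hu'.
have ha2 := walk_rev (@adj_sym m) ha.
have hab := walk_cat ha2 hb.
have [d [hd hdl]] := min_walk (leqnn _) hab.
exists d; split => //.
have -> : 2 ^ r = 2 ^ (r - 1) + 2 ^ (r - 1).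
  by rewrite addnn -mul2n -expnS; congr (2 ^ _); lia.
lia.
Qed.
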